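(* Let $p\in\{2,3\}$, and let \[ F(z) = {}_{2}F_{1} \left( \tfrac{1}{6}, \tfrac{5}{6} ; 1 ; 432z \right) = \sum_{m=0}^{\infty} A(m) z^{m}, \qquad F_{s}(z) = \sum_{m=0}^{p^{s}-1} A(m) z^{m}, \] where $A(m) = \frac{(6m)!}{(3m)!(2m)!m!} = \binom{3m}{m}\binom{6m}{3m}$. Then for every $s \in \mathbb{Z}_{\ge0}$ and $n\ge0$, \[ \frac{F(z)}{F(z^{p})} \equiv \frac{F_{s+1}(z)}{F_{s}(z^{p})} \pmod{p^{s+1}}, \qquad \frac{F^{(n)}(z)}{F(z)} \equiv \frac{F^{(n)}_{s+1}(z)}{F_{s+1}(z)} \pmod{p^{s+1}} , \] where $F^{(n)}$ denotes the $n$-th derivative.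
   Context: ${}_2F_1(a,b;c;z)=\sum_{m\ge0}\frac{(a)_m(b)_m}{(c)_m m!}z^m$. All series involved lie in $\mathbb{Z}[\![z]\!]$ with constant term 1 (hence are invertible); a congruence modulo $p^{s+1}$ means all coefficients of the difference are divisible by $p^{s+1}$. *)

(* Defs.v *)
From mathcomp Require Import all_boot all_order all_algebra.
Set Implicit Arguments. Unset Strict Implicit. Unset Printing Implicit Defensive.
Import Order.TTheory GRing.Theory Num.Theory.
Local Open Scope ring_scope.

Definition pseries := nat -> int.

Definition smul (f g : pseries) : pseries :=
  fun n => \sum_(i < n.+1) f i * g (n - i)%N.

Definition scompX (f : pseries) (p : nat) : pseries :=
  fun n => if (p %| n)%N then f (n %/ p)%N else 0.

Definition sderiv (n : nat) (f : pseries) : pseries :=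
  fun k => f (k + n)%N * ((k + n) ^_ n)%:R.

Fixpoint sinv_upto (f : pseries) (n : nat) : seq int :=
  match n with
  | 0 => [:: 1]
  | n'.+1 => let s := sinv_upto f n' in
             rcons s (- \sum_(i < n'.+1) f i.+1 * nth 0 s (n' - i)%N)
  end.

(* inverse of a series with constant term 1 (all series below have f 0 = 1) *)
Definition sinv (f : pseries) : pseries := fun n => nth 0 (sinv_upto f n) n.

Definition scong (m : int) (f g : pseries) : Prop :=
  forall k, (m %| f k - g k)%Z.

Definition Acoef (m : nat) : int := ('C(3 * m, m) * 'C(6 * m, 3 * m))%N%:Z.

Definition Fser : pseries := Acoef.

Definition Ftrunc (p s : nat) : pseries :=
  fun m => if (m < p ^ s)%N then Acoef m else 0.

(* Main.v *)
From HB Require Import structures.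
Require Import Defs.
From mathcomp Require Import all_boot all_order all_algebra.
From mathcomp Require Import ring zify.
From mathcomp Require boolp.
From Stdlib Require Import FunctionalExtensionality.
Import Order.TTheory GRing.Theory Num.Theory.
Set Implicit Arguments. Unset Strict Implicit. Unset Printing Implicit Defensive.

Module M1.
Local Open Scope ring_scope.

Lemma nat_intr (n : nat) : ((n%:Z)%:~R : rat) = n%:R.
Proof. by rewrite -pmulrn. Qed.

Section PDiv.
Variable p : nat.
Hypothesis hp : prime p.

Definition pdv (e : nat) (x : rat) : Prop :=
  exists (n : int) (d : nat), ~~ (p %| d)%N /\ x * d%:R = (p%:R)^+e * n%:~R.

Lemma p_gt0 : (0 < p)%N. Proof. exact: prime_gt0. Qed.
Lemma pR_neq0 : (p%:R : rat) != 0. Proof. by rewrite pnatr_eq0 -lt0n p_gt0. Qed.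

Lemma ndvd1 : ~~ (p %| 1)%N. Proof. by rewrite dvdn1 neq_ltn prime_gt1 ?orbT. Qed.

Lemma ndvdM d1 d2 : ~~ (p %| d1)%N -> ~~ (p %| d2)%N -> ~~ (p %| d1 * d2)%N.
Proof. by move=> h1 h2; rewrite Euclid_dvdM // negb_or h1 h2. Qed.

Lemma pdv_int (z : int) : pdv 0 z%:~R.
Proof. exists z, 1%N; split; first exact: ndvd1. by rewrite mulr1 expr0 mul1r. Qed.

Lemma pdv0 e : pdv e 0.
Proof. exists 0, 1%N; split; first exact: ndvd1. by rewrite mul0r mulr0. Qed.

Lemma pdvD e x y : pdv e x -> pdv e y -> pdv e (x + y).
Proof.
move=> [n1 [d1 [h1 e1]]] [n2 [d2 [h2 e2]]].
exists (n1 * d2%:Z + n2 * d1%:Z), (d1 * d2)%N; split; first exact: ndvdM.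
rewrite natrM mulrDl.
have -> : x * (d1%:R * d2%:R) = (x * d1%:R) * d2%:R by ring.
have -> : y * (d1%:R * d2%:R) = (y * d2%:R) * d1%:R by ring.
rewrite e1 e2 intrD !intrM /= !nat_intr. ring.
Qed.

Lemma pdvN e x : pdv e x -> pdv e (- x).
Proof.
move=> [n [d [h E]]]; exists (- n), d; split => //.
by rewrite mulNr E intrN mulrN.
Qed.

Lemma pdvB e x y : pdv e x -> pdv e y -> pdv e (x - y).
Proof. by move=> hx hy; apply: pdvD => //; apply: pdvN. Qed.

Lemma pdvM e f x y : pdv e x -> pdv f y -> pdv (e + f) (x * y).
Proof.
move=> [n1 [d1 [h1 e1]]] [n2 [d2 [h2 e2]]].
exists (n1 * n2), (d1 * d2)%N; split; first exact: ndvdM.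
rewrite natrM exprD intrM.
have -> : x * y * (d1%:R * d2%:R) = (x * d1%:R) * (y * d2%:R) by ring.
rewrite e1 e2; ring.
Qed.

Lemma pdvMl e x y : pdv 0 x -> pdv e y -> pdv e (x * y).
Proof. exact: (pdvM (e := 0)). Qed.

Lemma pdvMr e x y : pdv e x -> pdv 0 y -> pdv e (x * y).
Proof. by move=> h1 h2; rewrite -[e]addn0; exact: pdvM. Qed.

Lemma pdv_le e e' x : (e' <= e)%N -> pdv e x -> pdv e' x.
Proof.
move=> le [n [d [h E]]]; exists (n * (p ^ (e - e'))%N%:Z), d; split => //.
rewrite E intrM.
have -> : ((p ^ (e - e'))%N%:Z)%:~R = (p%:R : rat) ^+ (e - e') by rewrite nat_intr natrX.
rewrite -{1}(subnKC le) exprD; ring.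
Qed.

Lemma pdvpX e k x : pdv e x -> pdv (e + k) ((p%:R) ^+ k * x).
Proof.
move=> [n [d [h E]]]; exists n, d; split => //.
by rewrite -mulrA E exprD; ring.
Qed.

Lemma pdv_divp e x : pdv e.+1 x -> pdv e (x / p%:R).
Proof.
move=> [n [d [h E]]]; exists n, d; split => //.
have hp0 := pR_neq0.
rewrite mulrAC E exprS. field. exact: hp0.
Qed.

Lemma pdv_sum e (I : Type) (r : seq I) (P : pred I) (F : I -> rat) :
  (forall i, P i -> pdv e (F i)) -> pdv e (\sum_(i <- r | P i) F i).
Proof.
move=> h; apply: (big_ind (pdv e)) => //; first exact: pdv0.
exact: pdvD.
Qed.

Lemma pdv_dvd e (z : int) : pdv e z%:~R -> ((p ^ e)%N%:Z %| z)%Z.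
Proof.
move=> [n [d [h E]]].
have E' : z * d%:Z = (p ^ e)%N%:Z * n.
  apply: (@intr_inj rat). by rewrite !intrM !nat_intr E natrX.
have cop : coprimez (p ^ e)%N%:Z d%:Z.
  rewrite /coprimez /gcdz /=. have : coprime (p ^ e) d by rewrite coprimeXl // prime_coprime. by [].
rewrite -(Gauss_dvdzl _ cop) E'. exact: dvdz_mulr.
Qed.

End PDiv.

End M1.
Import M1.

Module M2.
Local Open Scope ring_scope.

Definition ser := nat -> rat.
Definition cv (f h : ser) : ser := fun N => \sum_(i < N.+1) f i * h (N - i)%N.
Definition del : ser := fun n => (n == 0%N)%:R.

Lemma cv_coef_gen (f h : ser) (P Q : {poly rat}) N :
  (forall i, (i <= N)%N -> f i = P`_i) -> (forall i, (i <= N)%N -> h i = Q`_i) ->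
  cv f h N = (P * Q)`_N.
Proof.
move=> hf hh; rewrite coefM /cv; apply: eq_bigr => i _.
rewrite hf ?hh //; [exact: leq_subr | by rewrite -ltnS].
Qed.

Definition pf (K : nat) (f : ser) : {poly rat} := \poly_(i < K) f i.

Lemma pf_coef K f i : (i < K)%N -> f i = (pf K f)`_i.
Proof. by move=> h; rewrite coef_poly h. Qed.

Lemma pfc N f i : (i <= N)%N -> f i = (pf N.+1 f)`_i.
Proof. by move=> h; apply: pf_coef. Qed.

Lemma cv_comm f h N : cv f h N = cv h f N.
Proof.
rewrite (cv_coef_gen (pfc f) (pfc h)) (cv_coef_gen (pfc h) (pfc f)).
by rewrite mulrC.
Qed.

Lemma cv_assoc f g h N : cv (cv f g) h N = cv f (cv g h) N.
Proof.
have E1 : forall i, (i <= N)%N -> cv f g i = (pf N.+1 f * pf N.+1 g)`_i.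
  move=> i hi; apply: cv_coef_gen => j hj; apply: pf_coef; lia.
have E2 : forall i, (i <= N)%N -> cv g h i = (pf N.+1 g * pf N.+1 h)`_i.
  move=> i hi; apply: cv_coef_gen => j hj; apply: pf_coef; lia.
rewrite (cv_coef_gen E1 (pfc h)) (cv_coef_gen (pfc f) E2).
by rewrite mulrA.
Qed.

Lemma cv_ext f f' h h' N : (forall i, f i = f' i) -> (forall i, h i = h' i) ->
  cv f h N = cv f' h' N.
Proof. by move=> e1 e2; apply: eq_bigr => i _; rewrite e1 e2. Qed.

Lemma cv_linl a b f g h N :
  cv (fun i => a * f i + b * g i) h N = a * cv f h N + b * cv g h N.
Proof.
rewrite /cv !mulr_sumr -big_split; apply: eq_bigr => i _ /=; ring.
Qed.

Lemma cv_linr a b f g h N :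
  cv h (fun i => a * f i + b * g i) N = a * cv h f N + b * cv h g N.
Proof. by rewrite cv_comm cv_linl (cv_comm f) (cv_comm g). Qed.

Lemma cv_addl f g h N : cv (fun i => f i + g i) h N = cv f h N + cv g h N.
Proof.
have := cv_linl 1 1 f g h N; rewrite !mul1r => <-.
by apply: cv_ext => i //; rewrite !mul1r.
Qed.

Lemma cv_addr f g h N : cv h (fun i => f i + g i) N = cv h f N + cv h g N.
Proof. by rewrite cv_comm cv_addl !(cv_comm h). Qed.

Lemma cv_subl f g h N : cv (fun i => f i - g i) h N = cv f h N - cv g h N.
Proof.
have := cv_linl 1 (-1) f g h N; rewrite mul1r mulN1r => <-.
by apply: cv_ext => i //; rewrite mul1r mulN1r.
Qed.

Lemma cv_subr f g h N : cv h (fun i => f i - g i) N = cv h f N - cv h g N.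
Proof. by rewrite cv_comm cv_subl !(cv_comm h). Qed.

Lemma cv_scalel c f h N : cv (fun i => c * f i) h N = c * cv f h N.
Proof. rewrite /cv mulr_sumr; apply: eq_bigr => i _; ring. Qed.

Lemma cv_scaler c f h N : cv h (fun i => c * f i) N = c * cv h f N.
Proof. by rewrite cv_comm cv_scalel cv_comm. Qed.

Lemma cv0l h N : cv (fun _ => 0) h N = 0.
Proof. by rewrite /cv big1 // => i _; rewrite mul0r. Qed.

Lemma cv0r h N : cv h (fun _ => 0) N = 0.
Proof. by rewrite cv_comm cv0l. Qed.

Lemma cv_del f N : cv f del N = f N.
Proof.
rewrite /cv big_ord_recr /= subnn /del eqxx mulr1 big1 ?add0r // => i _.
have : (N - i != 0)%N by rewrite subn_eq0 -ltnNge ltn_ord.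
by move/negbTE => ->; rewrite mulr0.
Qed.

Section Cong.
Variable p : nat.
Hypothesis hp : prime p.

Definition pcong e (f : ser) := forall k, pdv p e (f k).
Definition pint (f : ser) := forall k, pdv p 0 (f k).

Lemma cv_pcong e f h : pcong e f -> pint h -> pcong e (cv f h).
Proof.
move=> hf hh k; apply: pdv_sum => // i _.
rewrite -[e]addn0; exact: pdvM.
Qed.

Lemma cv_pint f h : pint f -> pint h -> pint (cv f h).
Proof. exact: cv_pcong. Qed.

End Cong.

End M2.
Import M2.

Module M3.
Local Open Scope ring_scope.

Lemma sum_if_eq K (F : nat -> rat) k : (k < K)%N ->
  \sum_(j < K) (if (j == k :> nat) then F j else 0) = F k.
Proof. by move=> h; rewrite -big_mkcond big_ord1_eq h. Qed.

Lemma cv_sq f h N K : (N < K)%N ->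
  cv f h N = \sum_(i < K) \sum_(j < K) (if (i + j == N)%N then f i * h j else 0).
Proof.
move=> hK.
have E : forall i : 'I_K, \sum_(j < K) (if (i + j == N)%N then f i * h j else 0)
   = if (i <= N)%N then f i * h (N - i)%N else 0.
  move=> i; case: leqP => hi.
    rewrite -(@sum_if_eq K (fun j => f i * h j) (N - i)); last by lia.
    apply: eq_bigr => j _; congr (if _ then _ else _); apply/eqP/eqP; lia.
  rewrite big1 // => j _; case: eqP => // ?; lia.
rewrite (eq_bigr _ (fun i _ => E i)) /cv (big_ord_widen K (fun i => f i * h (N - i)%N) hK).
by rewrite big_mkcond; apply: eq_bigr => i _; rewrite ltnS.
Qed.

Lemma sum_split (p K : nat) (F : nat -> rat) :
  \sum_(i < K * p) F i = \sum_(b < p) \sum_(x < K) F (b + p * x)%N.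
Proof.
elim: K => [|K IH].
  by rewrite mul0n big_ord0 big1 // => b _; rewrite big_ord0.
rewrite mulSnr big_split_ord /= IH.
rewrite [RHS](eq_bigr (fun b : 'I_p => \sum_(x < K) F (b + p * x)%N + F (b + p * K)%N)); last first.
  by move=> b _; rewrite big_ord_recr.
rewrite big_split /=; congr (_ + _); apply: eq_bigr => b _.
by rewrite addnC mulnC.
Qed.

Section PSec.
Variable p : nat.
Hypothesis hp : prime p.

Definition sec (b : nat) (f : ser) : ser := fun x => f (b + p * x)%N.

Lemma psec_arith b c x y N :
  (b + p * x + (c + p * y) == N)%N =
  ((b + c <= N) && (p %| N - (b + c)) && (x + y == (N - (b + c)) %/ p))%N.
Proof.
have p0 := prime_gt0 hp.
case E: (b + p * x + (c + p * y) == N)%N.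
  move/eqP: E => <-.
  have -> : (b + p * x + (c + p * y) - (b + c) = p * (x + y))%N by lia.
  rewrite dvdn_mulr // mulKn // eqxx andbT; apply/esym; lia.
apply/esym/negbTE; apply/negP => /andP [/andP [h1 h2] /eqP h3].
have h4 : (N - (b + c) = (x + y) * p)%N by rewrite h3 divnK.
move/negbT: E => /eqP; apply; lia.
Qed.

Lemma cv_psec f h N :
  cv f h N = \sum_(b < p) \sum_(c < p)
    (if ((b + c <= N) && (p %| N - (b + c)))%N
     then cv (sec b f) (sec c h) ((N - (b + c)) %/ p)%N else 0).
Proof.
have p0 := prime_gt0 hp.
have hK : (N < N.+1 * p)%N by rewrite (leq_trans (ltnSn N)) // leq_pmulr.
rewrite (cv_sq f h hK).
rewrite (sum_split p N.+1 (fun i => \sum_(j < N.+1 * p) (if (i + j == N)%N then f i * h j else 0))).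
apply: eq_bigr => b _.
rewrite (eq_bigr (fun x : 'I_N.+1 => \sum_(c < p) \sum_(y < N.+1)
   (if (b + p * x + (c + p * y) == N)%N then f (b + p * x)%N * h (c + p * y)%N else 0)%R));
  last by move=> x _; rewrite (sum_split p N.+1 (fun j => (if (b + p * x + j == N)%N then f (b + p * x)%N * h j else 0))).
rewrite exchange_big /=; apply: eq_bigr => c _.
case: ifP => cond.
  have hM : ((N - (b + c)) %/ p < N.+1)%N.
    rewrite ltnS; apply: (leq_trans (leq_div _ _)); exact: leq_subr.
  rewrite (cv_sq _ _ hM); apply: eq_bigr => x _; apply: eq_bigr => y _.
  by rewrite psec_arith cond.
rewrite big1 // => x _; rewrite big1 // => y _.
by rewrite psec_arith cond.
Qed.

End PSec.

End M3.
Import M3.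

Module M4.
Local Open Scope ring_scope.

Section Dwork.
Variable p : nat.
Hypothesis hp : prime p.
Variables A g : ser.
Hypothesis hA : forall x, A x = g x * A (x %/ p)%N.
Hypothesis hAi : pint p A.
Hypothesis hg0 : forall x, pdv p 0 (g x).
Hypothesis hgC : forall j x m, pdv p j (g (x + m * p ^ j)%N - g x).

Definition Au (u : ser) : ser := fun i => A i * u i.
Definition ge t (f : ser) : ser := fun i => if (p ^ t <= i)%N then f i else 0.
Definition lt t (f : ser) : ser := fun i => if (i < p ^ t)%N then f i else 0.
Definition S t u v N :=
  cv (ge t (Au u)) (lt t (Au v)) N - cv (ge t (Au v)) (lt t (Au u)) N.
Definition C1 (u : ser) :=
  (forall x, pdv p 0 (u x)) /\ (forall j x m, pdv p j.+1 (u (x + m * p ^ j)%N - u x)).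

Lemma S_ext t u u' v v' N : (forall i, u i = u' i) -> (forall i, v i = v' i) ->
  S t u v N = S t u' v' N.
Proof.
move=> hu hv; rewrite /S; congr (_ - _); apply: cv_ext => i;
  by rewrite /ge /lt /Au ?hu ?hv.
Qed.

Lemma S_expand t u v N : S t u v N = \sum_(i < N.+1)
  (ge t A i * lt t A (N - i)%N) * (u i * v (N - i)%N - v i * u (N - i)%N).
Proof.
rewrite /S /cv -sumrB; apply: eq_bigr => i _.
rewrite /ge /lt /Au; case: ifP => _; case: ifP => _; ring.
Qed.

Lemma S_linl t (a b : rat) u1 u2 u v N : (forall i, u i = a * u1 i + b * u2 i) ->
  S t u v N = a * S t u1 v N + b * S t u2 v N.
Proof.
move=> hu; rewrite !S_expand !mulr_sumr -big_split; apply: eq_bigr => i _ /=.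
rewrite !hu; ring.
Qed.

Lemma S_linr t (a b : rat) v1 v2 u v N : (forall i, v i = a * v1 i + b * v2 i) ->
  S t u v N = a * S t u v1 N + b * S t u v2 N.
Proof.
move=> hv; rewrite !S_expand !mulr_sumr -big_split; apply: eq_bigr => i _ /=.
rewrite !hv; ring.
Qed.

Lemma S_same t u N : S t u u N = 0.
Proof. by rewrite /S subrr. Qed.

Definition Ub (u : ser) (b : nat) : ser := fun x => g (b + p * x)%N * u (b + p * x)%N.

Lemma div_bpx b x : (b < p)%N -> ((b + p * x) %/ p = x)%N.
Proof.
move=> hb; have p0 := prime_gt0 hp.
by rewrite mulnC divnDMl // divn_small.
Qed.

Lemma le_bpx t b x : (b < p)%N -> (p ^ t.+1 <= b + p * x)%N = (p ^ t <= x)%N.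
Proof.
move=> hb; have p0 := prime_gt0 hp; rewrite expnS.
apply/idP/idP => h.
  rewrite leqNgt; apply/negP => hx.
  have : (p * x.+1 <= p * p ^ t)%N by rewrite leq_mul2l hx orbT.
  rewrite mulnS; lia.
apply: (leq_trans _ (leq_addl b _)); by rewrite leq_mul2l h orbT.
Qed.

Lemma S_rec t u v N : S t.+1 u v N = \sum_(b < p) \sum_(c < p)
    (if ((b + c <= N) && (p %| N - (b + c)))%N
     then S t (Ub u b) (Ub v c) ((N - (b + c)) %/ p)%N else 0).
Proof.
rewrite /S (cv_psec hp (ge t.+1 (Au u))) (cv_psec hp (ge t.+1 (Au v))).
rewrite [X in _ - X]exchange_big -sumrB; apply: eq_bigr => b _.
rewrite -sumrB; apply: eq_bigr => c _ /=.
rewrite (addnC c b); case: ifP => _; last by rewrite subr0.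
have E : forall (w : ser) (d : 'I_p) (f : ser -> ser) ,
    (forall x, sec p d (f (Au w)) x = f (Au (Ub w d)) x) -> True by [].
congr (_ - _); apply: cv_ext => x; rewrite /sec /ge /lt /Au /Ub.
- rewrite le_bpx // hA div_bpx //; case: ifP => _ //; ring.
- rewrite ltnNge le_bpx // -ltnNge hA div_bpx //; case: ifP => _ //; ring.
- rewrite le_bpx // hA div_bpx //; case: ifP => _ //; ring.
- rewrite ltnNge le_bpx // -ltnNge hA div_bpx //; case: ifP => _ //; ring.
Qed.

Lemma C1_const c : pdv p 0 c -> C1 (fun _ => c).
Proof. move=> h; split => // j x m; rewrite subrr; exact: pdv0. Qed.

Lemma C1_mul u v : C1 u -> C1 v -> C1 (fun x => u x * v x).
Proof.
move=> [u0 u1] [v0 v1]; split => [x|j x m]; first exact: pdvMl.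
have -> : u (x + m * p ^ j)%N * v (x + m * p ^ j)%N - u x * v x =
  u (x + m * p ^ j)%N * (v (x + m * p ^ j)%N - v x) + (u (x + m * p ^ j)%N - u x) * v x by ring.
apply: pdvD => //; [exact: pdvMl | exact: pdvMr].
Qed.

Lemma shift_arith c x m j : (c + p * (x + m * p ^ j) = (c + p * x) + m * p ^ j.+1)%N.
Proof. rewrite expnS; ring. Qed.

Lemma C1_shift u c : C1 u -> C1 (fun x => u (c + p * x)%N).
Proof.
move=> [u0 u1]; split => // j x m; rewrite shift_arith.
apply: (pdv_le (e := j.+2)) => //; exact: u1.
Qed.

Lemma C1_g c : C1 (fun x => g (c + p * x)%N).
Proof. split => // j x m; rewrite shift_arith; exact: hgC. Qed.

Lemma C1_Ub u c : C1 u -> C1 (Ub u c).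
Proof. move=> hu; apply: C1_mul; [exact: C1_g | exact: C1_shift]. Qed.

Definition wb (u : ser) (b : nat) : ser := fun x => (u (b + p * x)%N - u b) / p%:R.

Lemma C1_w u b : C1 u -> C1 (wb u b).
Proof.
move=> [u0 u1]; split => [x|j x m].
  apply: (pdv_le (e := 1)) => //; apply: pdv_divp => //.
  have := u1 1%N b x; by rewrite expn1 mulnC.
rewrite /wb -mulrBl -[(_ - _) - (_ - _)]/((_ - _) - (_ - _)).
have -> : u (b + p * (x + m * p ^ j))%N - u b - (u (b + p * x)%N - u b) =
   u (b + p * x + m * p ^ j.+1)%N - u (b + p * x)%N by rewrite shift_arith; ring.
apply: pdv_divp => //; exact: u1.
Qed.

Lemma C1_diff u x y : C1 u -> pdv p 1 (u x - u y).
Proof.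
move=> [u0 u1].
have h : forall z, pdv p 1 (u z - u 0%N).
  move=> z; have := u1 0%N 0%N z; by rewrite expn0 muln1 add0n.
have -> : u x - u y = (u x - u 0%N) - (u y - u 0%N) by ring.
by apply: pdvB.
Qed.

Lemma pdv_p e x : pdv p e x -> pdv p e.+1 (p%:R * x).
Proof. move=> h; have := pdvpX 1 h; by rewrite expr1 addn1. Qed.

Lemma ge_pint t f : pint p f -> pint p (ge t f).
Proof. move=> h k; rewrite /ge; case: ifP => _ //; exact: pdv0. Qed.
Lemma lt_pint t f : pint p f -> pint p (lt t f).
Proof. move=> h k; rewrite /lt; case: ifP => _ //; exact: pdv0. Qed.

Theorem dwork t u v N : C1 u -> C1 v -> pdv p t.+1 (S t u v N).
Proof.
elim: t u v N => [|t IH] u v N hu hv.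
  rewrite S_expand; apply: pdv_sum => // i _.
  apply: pdvMl => //.
    apply: pdvMl => //; [exact: ge_pint | exact: lt_pint].
  have -> : u i * v (N - i)%N - v i * u (N - i)%N =
    (u i - u 0%N) * v (N - i)%N + u 0%N * (v (N - i)%N - v 0%N)
    - ((v i - v 0%N) * u (N - i)%N + v 0%N * (u (N - i)%N - u 0%N)) by ring.
  have [hu0 _] := hu; have [hv0 _] := hv.
  apply: pdvB => //; apply: pdvD => //.
  - apply: pdvMr => //; exact: C1_diff.
  - apply: pdvMl => //; exact: C1_diff.
  - apply: pdvMr => //; exact: C1_diff.
  - apply: pdvMl => //; exact: C1_diff.
have [hu0 _] := hu; have [hv0 _] := hv.
set gb := fun b : nat => (fun x => g (b + p * x)%N).
have key : forall (b c : nat) M, pdv p t.+2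
   (S t (Ub u b) (Ub v c) M - u b * v c * S t (gb b) (gb c) M).
  move=> b c M.
  have p0 := pR_neq0 hp.
  have E1 : forall (w : ser) (d : nat) x,
      Ub w d x = w d * gb d x + p%:R * (fun y => gb d y * wb w d y) x.
    move=> w d x; rewrite /Ub /gb /wb /=; field; exact: p0.
  rewrite (S_linl _ _ _ (E1 u b)) (S_linr _ _ _ (E1 v c)).
  have -> : u b * (v c * S t (gb b) (gb c) M
      + p%:R * S t (gb b) (fun y => gb c y * wb v c y) M)
      + p%:R * S t (fun y => gb b y * wb u b y) (Ub v c) M
      - u b * v c * S t (gb b) (gb c) M
    = p%:R * (u b * S t (gb b) (fun y => gb c y * wb v c y) M
        + S t (fun y => gb b y * wb u b y) (Ub v c) M) by ring.
  apply: pdv_p => //; apply: pdvD => //.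
    apply: pdvMl => //; apply: IH; first exact: C1_g.
    apply: C1_mul; [exact: C1_g | exact: C1_w].
  apply: IH; last exact: C1_Ub.
  apply: C1_mul; [exact: C1_g | exact: C1_w].
have S11 : S t.+1 (fun _ => 1) (fun _ => 1) N = 0 by rewrite S_same.
have -> : S t.+1 u v N = S t.+1 u v N - u 0%N * v 0%N * S t.+1 (fun _ => 1) (fun _ => 1) N
  by rewrite S11 mulr0 subr0.
rewrite !S_rec mulr_sumr -sumrB; apply: pdv_sum => // b _.
rewrite mulr_sumr -sumrB; apply: pdv_sum => // c _.
case: ifP => _; last by rewrite mulr0 subr0; exact: pdv0.
rewrite (@S_ext t (Ub (fun _ => 1) b) (gb b) (Ub (fun _ => 1) c) (gb c)); last 2 first.
- by move=> i; rewrite /Ub mulr1.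
- by move=> i; rewrite /Ub mulr1.
set M := ((N - (b + c)) %/ p)%N.
have -> : S t (Ub u b) (Ub v c) M - u 0%N * v 0%N * S t (gb b) (gb c) M =
  (S t (Ub u b) (Ub v c) M - u b * v c * S t (gb b) (gb c) M)
  + (u b * v c - u 0%N * v 0%N) * S t (gb b) (gb c) M by ring.
apply: pdvD => //.
apply: (@pdvM p hp 1%N t.+1); last by apply: IH; exact: C1_g.
have -> : u b * v c - u 0%N * v 0%N = (u b - u 0%N) * v c + u 0%N * (v c - v 0%N) by ring.
apply: pdvD => //.
  apply: pdvMr => //; exact: C1_diff.
apply: pdvMl => //; exact: C1_diff.
Qed.

End Dwork.

End M4.
Import M4.

Module M5.

Section PF.
Variable p : nat.
Hypothesis hp : prime p.

Fixpoint Pf (N : nat) : nat :=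
  match N with 0 => 1 | N'.+1 => (if p %| N'.+1 then 1 else N'.+1) * Pf N' end.

Lemma Pf_ndvd N : ~~ (p %| Pf N).
Proof.
elim: N => [|N IH] /=; first exact: ndvd1.
apply: ndvdM => //; case: ifP => h; [exact: ndvd1 | by rewrite h].
Qed.

Lemma Pf_gt0 N : 0 < Pf N.
Proof. rewrite lt0n; apply/negP => /eqP h; have := Pf_ndvd N; by rewrite h dvdn0. Qed.

Lemma fact_Pf N : N`! = p ^ (N %/ p) * (N %/ p)`! * Pf N.
Proof.
have p0 := prime_gt0 hp.
elim: N => [|N IH]; first by rewrite div0n.
rewrite factS /= IH (divnS _ p0).
case: ifP => h /=.
  have E : N.+1 = (N %/ p).+1 * p.
    by rewrite -{1}(divnK h) (divnS _ p0) h.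
  rewrite add1n factS expnS {1}E; ring.
by rewrite add0n; ring.
Qed.

Lemma Pf_shift k N : 0 < k -> Pf (N + p ^ k) = Pf N * Pf (p ^ k) %[mod p ^ k].
Proof.
move=> k0; elim: N => [|N IH]; first by rewrite add0n mul1n.
rewrite addSn /=.
have hd : (p %| (N + p ^ k).+1) = (p %| N.+1).
  by rewrite -addSn dvdn_addl // dvdn_exp.
rewrite hd -[in LHS]modnMm IH modnMm.
case: ifP => _; first by rewrite !mul1n.
rewrite -mulnA -[in LHS]modnMml -[in RHS]modnMml.
by rewrite -addSn modnDr.
Qed.

Lemma Pf_shiftL k L N : 0 < k ->
  Pf (N + L * p ^ k) = Pf N * Pf (p ^ k) ^ L %[mod p ^ k].
Proof.
move=> k0; elim: L => [|L IH]; first by rewrite mul0n addn0 expn0 muln1.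
rewrite mulSnr addnA Pf_shift // -modnMml IH modnMml expnSr; congr (_ %% _); ring.
Qed.

End PF.

End M5.
Import M5.

Module M6.

Definition Anat (m : nat) : nat := 'C(3 * m, m) * 'C(6 * m, 3 * m).

Lemma Anat_fact x : Anat x * ((3 * x)`! * (2 * x)`! * x`!) = (6 * x)`!.
Proof.
have l1 : x <= 3 * x by lia.
have l2 : 3 * x <= 6 * x by lia.
have h1 := bin_fact l1.
have h2 := bin_fact l2.
have e1 : 3 * x - x = 2 * x by lia.
have e2 : 6 * x - 3 * x = 3 * x by lia.
rewrite e1 in h1; rewrite e2 in h2.
rewrite -h2 -{2}h1 /Anat; ring.
Qed.

Lemma modM_cong d a1 a2 b1 b2 : a1 = b1 %[mod d] -> a2 = b2 %[mod d] ->
  a1 * a2 = b1 * b2 %[mod d].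
Proof. by move=> h1 h2; rewrite -modnMm h1 h2 modnMm. Qed.

Lemma Aid3 x : Anat x * Pf 3 (3 * x) * x`! ^ 2 = 3 ^ (1 * x) * Pf 3 (6 * x).
Proof.
have F6 := fact_Pf (isT : prime 3) (6 * x).
have F3 := fact_Pf (isT : prime 3) (3 * x).
have d6 : (6 * x) %/ 3 = 2 * x by rewrite (_ : 6 * x = (2 * x) * 3) ?mulnK //; ring.
have d3 : (3 * x) %/ 3 = x by rewrite mulnC mulnK.
rewrite d6 in F6; rewrite d3 in F3.
have pos : 0 < 3 ^ x * (2 * x)`! by rewrite muln_gt0 expn_gt0 fact_gt0.
apply/eqP; rewrite -(eqn_pmul2l pos); apply/eqP.
transitivity (Anat x * ((3 * x)`! * (2 * x)`! * x`!)); first by rewrite F3; ring.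
rewrite Anat_fact F6 mul1n (_ : 2 * x = x + x) ?expnD; last by ring.
ring.
Qed.

Lemma Aid2 x : Anat x * Pf 2 (2 * x) * x`! ^ 2 = 2 ^ (2 * x) * Pf 2 (6 * x).
Proof.
have F6 := fact_Pf (isT : prime 2) (6 * x).
have F2 := fact_Pf (isT : prime 2) (2 * x).
have d6 : (6 * x) %/ 2 = 3 * x by rewrite (_ : 6 * x = (3 * x) * 2) ?mulnK //; ring.
have d2 : (2 * x) %/ 2 = x by rewrite mulnC mulnK.
rewrite d6 in F6; rewrite d2 in F2.
have pos : 0 < 2 ^ x * (3 * x)`! by rewrite muln_gt0 expn_gt0 fact_gt0.
apply/eqP; rewrite -(eqn_pmul2l pos); apply/eqP.
transitivity (Anat x * ((3 * x)`! * (2 * x)`! * x`!)); first by rewrite F2; ring.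
rewrite Anat_fact F6 (_ : 3 * x = x + 2 * x) ?expnD; last by ring.
ring.
Qed.

Open Scope ring_scope.
Lemma nat_mod_int (a b d : nat) : (a = b %[mod d])%N ->
  exists z : int, a%:Z - b%:Z = d%:Z * z.
Proof.
move=> h; exists ((a %/ d)%:Z - (b %/ d)%:Z)%R.
rewrite {1}(divn_eq a d) {1}(divn_eq b d) h.
rewrite !PoszD !PoszM; ring.
Qed.
Close Scope ring_scope.

Section G.
Variables (p c q : nat).
Hypothesis hp : prime p.
Hypothesis hq : q * p = 6.
Hypothesis hq5 : q + p = 5.
Hypothesis hc : c * p = c + 2.
Hypothesis hAid : forall x, Anat x * Pf p (p * x) * x`! ^ 2 = p ^ (c * x) * Pf p (6 * x).

Definition Num x := p ^ (c * (x %% p)) * Pf p (6 * x) * Pf p (p * (x %/ p)).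
Definition Den x := Pf p (6 * (x %/ p)) * Pf p (p * x) * Pf p x ^ 2.

Lemma Den_gt0 x : 0 < Den x.
Proof. by rewrite /Den !muln_gt0 !Pf_gt0. Qed.

Lemma Den_ndvd x : ~~ (p %| Den x).
Proof.
rewrite /Den; apply: ndvdM => //; first (apply: ndvdM => //; exact: Pf_ndvd).
rewrite expnS expn1; apply: ndvdM => //; exact: Pf_ndvd.
Qed.

Lemma ND x : Anat x * Den x = Num x * Anat (x %/ p).
Proof.
set n := x %/ p; set a := x %% p.
have ex : x = n * p + a by rewrite /n /a -divn_eq.
have Fx := fact_Pf hp x; rewrite -/n in Fx.
have An := hAid n; have Ax := hAid x.
have pos : 0 < p ^ (2 * n) * n`! ^ 2 by rewrite muln_gt0 !expn_gt0 fact_gt0 prime_gt0.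
apply/eqP; rewrite -(eqn_pmul2l pos); apply/eqP.
transitivity ((Anat x * Pf p (p * x) * x`! ^ 2) * Pf p (6 * n)).
  rewrite Fx /Den -/n; rewrite (_ : 2 * n = n + n) ?expnD; last by ring. ring.
transitivity (p ^ (c * a) * p ^ (2 * n) * Pf p (6 * x) * (Anat n * Pf p (p * n) * n`! ^ 2)); last first.
  rewrite /Num -/n -/a; ring.
rewrite Ax An.
have -> : c * x = c * a + 2 * n + c * n.
  rewrite ex mulnDr (mulnC n p) mulnA hc; ring.
rewrite !expnD; ring.
Qed.

Lemma eND_lem x m k : let x' := x + m * p ^ k.+1 in
  Num x' * Den x = Num x * Den x' %[mod p ^ k.+1].
Proof.
move=> x'.
have p0 := prime_gt0 hp.
have hmod : (x' %% p = x %% p)%N.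
  by rewrite /x' expnS mulnCA -modnDmr modnMr addn0.
have hdiv : (x' %/ p = x %/ p + m * p ^ k)%N.
  by rewrite /x' expnS mulnCA mulnC divnDMl // mulnC.
have k0 : (0 < k.+1)%N by [].
set W := Pf p (p ^ k.+1).
have eN : Num x' = Num x * W ^ (7 * m) %[mod p ^ k.+1].
  rewrite /Num hmod hdiv.
  have e1 : (6 * x' = 6 * x + (6 * m) * p ^ k.+1)%N by rewrite /x'; ring.
  have e2 : (p * (x %/ p + m * p ^ k) = p * (x %/ p) + m * p ^ k.+1)%N by rewrite expnS; ring.
  rewrite e1 e2 (_ : (7 * m = 6 * m + m)%N); last by ring.
  rewrite expnD.
  have := modM_cong (Pf_shiftL p (6 * m) (6 * x) k0) (Pf_shiftL p m (p * (x %/ p)) k0).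
  move/(modM_cong (erefl ((p ^ (c * (x %% p))) %% p ^ k.+1))).
  rewrite -/W => h; rewrite -[in LHS]mulnA h; congr (_ %% _); ring.
have eD : Den x' = Den x * W ^ (7 * m) %[mod p ^ k.+1].
  rewrite /Den hdiv.
  have e1 : (6 * (x %/ p + m * p ^ k) = 6 * (x %/ p) + (q * m) * p ^ k.+1)%N.
    by rewrite expnS -hq; ring.
  have e2 : (p * x' = p * x + (p * m) * p ^ k.+1)%N by rewrite /x'; ring.
  rewrite e1 e2 (_ : (7 * m = q * m + p * m + m + m)%N); last first.
    by rewrite -!mulnDl hq5; ring.
  rewrite !expnD.
  have h1 := Pf_shiftL p (q * m) (6 * (x %/ p)) k0.
  have h2 := Pf_shiftL p (p * m) (p * x) k0.
  have h3 := Pf_shiftL p m x k0.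
  rewrite -/W /x' in h1 h2 h3 *.
  rewrite -!mulnn !mulnA.
  rewrite (modM_cong (modM_cong (modM_cong h1 h2) h3) h3); congr (_ %% _); ring.
  rewrite (modM_cong eN (erefl (Den x %% _))) (modM_cong (erefl (Num x %% _)) eD).
  congr (_ %% _); ring.
Qed.

Local Open Scope ring_scope.

Definition Ar (x : nat) : rat := (Anat x)%:R.
Definition gr (x : nat) : rat := (Num x)%:R / (Den x)%:R.

Lemma Den_neq0 x : (Den x)%:R != 0 :> rat.
Proof. by rewrite pnatr_eq0 -lt0n Den_gt0. Qed.

Lemma hA_ok x : Ar x = gr x * Ar (x %/ p)%N.
Proof.
have E : (Anat x)%:R * (Den x)%:R = (Num x)%:R * (Anat (x %/ p))%:R :> rat.
  by rewrite -!natrM ND.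
rewrite /Ar /gr; apply: (mulIf (Den_neq0 x)); rewrite E; field; exact: Den_neq0.
Qed.

Lemma hg0_ok x : pdv p 0 (gr x).
Proof.
exists (Num x)%:Z, (Den x); split; first exact: Den_ndvd.
rewrite /gr expr0 mul1r nat_intr; field; exact: Den_neq0.
Qed.

Lemma Ar_int x : pdv p 0 (Ar x).
Proof. by rewrite /Ar -nat_intr; exact: pdv_int. Qed.

Lemma hgC_ok j x m : pdv p j (gr (x + m * p ^ j)%N - gr x).
Proof.
case: j => [|k]; first by apply: pdvB => //; exact: hg0_ok.
set x' := (x + m * p ^ k.+1)%N.
have p0 := prime_gt0 hp.
have hmod : (x' %% p = x %% p)%N.
  by rewrite /x' expnS mulnCA -modnDmr modnMr addn0.
have hdiv : (x' %/ p = x %/ p + m * p ^ k)%N.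
  by rewrite /x' expnS mulnCA mulnC divnDMl // mulnC.
have k0 : (0 < k.+1)%N by [].
set W := Pf p (p ^ k.+1).
have eND := eND_lem x m k.
have [z hz] := nat_mod_int eND.
exists z, (Den x' * Den x)%N; split; first by apply: ndvdM => //; exact: Den_ndvd.
have hz' : (Num x')%:R * (Den x)%:R - (Num x)%:R * (Den x')%:R
    = (p%:R : rat) ^+ k.+1 * z%:~R.
  have := congr1 (fun w : int => (w%:~R : rat)) hz.
  rewrite /= intrB !nat_intr (natrM _ (Num x') (Den x)) (natrM _ (Num x) (Den x')).
  by rewrite intrM nat_intr natrX.
rewrite /gr (natrM _ (Den x') (Den x)) -hz'; field; apply/andP; split; exact: Den_neq0.
Qed.

End G.

End M6.
Import M6.

Module M7.
Import boolp.
Local Open Scope ring_scope.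

Record Ser := mkSer { co : nat -> rat }.
HB.instance Definition _ := gen_eqMixin Ser.
HB.instance Definition _ := gen_choiceMixin Ser.

Lemma Ser_ext (f g : Ser) : (forall n, co f n = co g n) -> f = g.
Proof.
case: f => f; case: g => g /= h; congr mkSer; exact: functional_extensionality.
Qed.

Definition sz : Ser := mkSer (fun _ => 0).
Definition sopp (f : Ser) := mkSer (fun n => - co f n).
Definition sad (f g : Ser) := mkSer (fun n => co f n + co g n).
Definition sone : Ser := mkSer del.
Definition smu (f g : Ser) := mkSer (cv (co f) (co g)).

Lemma sadA : associative sad.
Proof. by move=> f g h; apply: Ser_ext => n /=; rewrite addrA. Qed.
Lemma sadC : commutative sad.
Proof. by move=> f g; apply: Ser_ext => n /=; rewrite addrC. Qed.
Lemma sad0 : left_id sz sad.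
Proof. by move=> f; apply: Ser_ext => n /=; rewrite add0r. Qed.
Lemma sadN : left_inverse sz sopp sad.
Proof. by move=> f; apply: Ser_ext => n /=; rewrite addNr. Qed.

HB.instance Definition _ := GRing.isZmodule.Build Ser sadA sadC sad0 sadN.

Lemma smuA : associative smu.
Proof. by move=> f g h; apply: Ser_ext => n /=; rewrite cv_assoc. Qed.
Lemma smuC : commutative smu.
Proof. by move=> f g; apply: Ser_ext => n /=; rewrite cv_comm. Qed.
Lemma smu1 : left_id sone smu.
Proof. by move=> f; apply: Ser_ext => n /=; rewrite cv_comm cv_del. Qed.
Lemma smuDl : left_distributive smu sad.
Proof. by move=> f g h; apply: Ser_ext => n /=; rewrite cv_addl. Qed.
Lemma sone_neq0 : sone != sz.
Proof.
apply/negP => /eqP h; have := congr1 (fun f => co f 0%N) h.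
by rewrite /= /del eqxx /= => /eqP; rewrite oner_eq0.
Qed.

HB.instance Definition _ := GRing.Zmodule_isComNzRing.Build Ser smuA smuC smu1 smuDl sone_neq0.

Lemma coD f g n : co (f + g) n = co f n + co g n. Proof. by []. Qed.
Lemma coN f n : co (- f) n = - co f n. Proof. by []. Qed.
Lemma coB f g n : co (f - g) n = co f n - co g n. Proof. by []. Qed.
Lemma co0 n : co 0 n = 0. Proof. by []. Qed.
Lemma coM f g n : co (f * g) n = cv (co f) (co g) n. Proof. by []. Qed.
Lemma co1 n : co 1 n = del n. Proof. by []. Qed.
Lemma coMn f k n : co (f *+ k) n = co f n *+ k.
Proof. elim: k => [|k IH]; first by rewrite !mulr0n. by rewrite !mulrS coD IH. Qed.
Lemma coMnat f (k : nat) n : co (k%:R * f) n = k%:R * co f n.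
Proof. by rewrite mulr_natl coMn mulr_natl. Qed.


End M7.
Import M7.

Module M8.
Local Open Scope ring_scope.

Section SerCong.
Variable p : nat.
Hypothesis hp : prime p.

Definition cg e (f g : Ser) := forall n, pdv p e (co f n - co g n).
Definition pI (f : Ser) := forall n, pdv p 0 (co f n).

Lemma cg_refl e f : cg e f f.
Proof. by move=> n; rewrite subrr; exact: pdv0. Qed.
Lemma cg_eq e f g : f = g -> cg e f g.
Proof. by move=> ->; exact: cg_refl. Qed.
Lemma cg_sym e f g : cg e f g -> cg e g f.
Proof. by move=> h n; rewrite -opprB; apply: pdvN. Qed.
Lemma cg_trans e f g h : cg e f g -> cg e g h -> cg e f h.
Proof.
move=> h1 h2 n; have -> : co f n - co h n = (co f n - co g n) + (co g n - co h n) by ring.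
exact: pdvD.
Qed.
Lemma cg_add e f g f' g' : cg e f g -> cg e f' g' -> cg e (f + f') (g + g').
Proof.
move=> h1 h2 n; rewrite !coD; have -> : co f n + co f' n - (co g n + co g' n)
  = (co f n - co g n) + (co f' n - co g' n) by ring.
exact: pdvD.
Qed.
Lemma cg_opp e f g : cg e f g -> cg e (- f) (- g).
Proof.
move=> h n; rewrite !coN; have -> : - co f n - - co g n = - (co f n - co g n) by ring.
exact: pdvN.
Qed.
Lemma cg_sub e f g f' g' : cg e f g -> cg e f' g' -> cg e (f - f') (g - g').
Proof. by move=> h1 h2; apply: cg_add => //; apply: cg_opp. Qed.
Lemma cg_le e e' f g : (e' <= e)%N -> cg e f g -> cg e' f g.
Proof. by move=> le h n; apply: pdv_le (h n). Qed.
Lemma cg0 f g : pI f -> pI g -> cg 0 f g.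
Proof. by move=> h1 h2 n; apply: pdvB. Qed.

Lemma pI_add f g : pI f -> pI g -> pI (f + g).
Proof. by move=> h1 h2 n; rewrite coD; apply: pdvD. Qed.
Lemma pI_opp f : pI f -> pI (- f).
Proof. by move=> h n; rewrite coN; apply: pdvN. Qed.
Lemma pI_mul f g : pI f -> pI g -> pI (f * g).
Proof. by move=> h1 h2 n; rewrite coM; apply: cv_pint. Qed.
Lemma pI_1 : pI 1.
Proof. move=> n; rewrite co1 /del; case: (n == 0)%N; [exact: (pdv_int hp 1) | exact: (pdv_int hp 0)]. Qed.

Lemma cg_mulr e f g h : cg e f g -> pI h -> cg e (f * h) (g * h).
Proof.
move=> h1 h2 n; rewrite !coM -cv_subl.
exact: (cv_pcong hp (f := fun i => co f i - co g i)).
Qed.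
Lemma cg_mull e f g h : cg e f g -> pI h -> cg e (h * f) (h * g).
Proof. by move=> h1 h2; rewrite ![h * _]mulrC; apply: cg_mulr. Qed.
Lemma cg_mul e f g f' g' : cg e f g -> cg e f' g' -> pI g -> pI f' ->
  cg e (f * f') (g * g').
Proof.
move=> h1 h2 i1 i2; apply: (cg_trans (g := g * f')); first exact: cg_mulr.
exact: cg_mull.
Qed.

Lemma cg_inv e f g fi gi : cg e f g -> f * fi = 1 -> g * gi = 1 -> pI fi -> pI gi ->
  cg e fi gi.
Proof.
move=> h hf hg i1 i2 n.
have E : fi - gi = (g - f) * (fi * gi).
  have -> : fi - gi = fi * (g * gi) - gi * (f * fi) by rewrite hf hg !mulr1.
  ring.
rewrite -coB E coM; apply: (cv_pcong hp) => [k|]; last exact: pI_mul.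
rewrite coB -opprB; exact: pdvN.
Qed.

Definition th (f : Ser) := mkSer (fun k => co f k * k%:R).

Lemma th_add f g : th (f + g) = th f + th g.
Proof. by apply: Ser_ext => k /=; rewrite mulrDl. Qed.
Lemma th_opp f : th (- f) = - th f.
Proof. by apply: Ser_ext => k /=; rewrite mulNr. Qed.
Lemma th_sub f g : th (f - g) = th f - th g.
Proof. by rewrite th_add th_opp. Qed.
Lemma th_1 : th 1 = 0.
Proof. apply: Ser_ext => k /=; rewrite /del; case: k => [|k] /=; by rewrite ?mulr0 ?mul0r. Qed.

Lemma th_mul f g : th (f * g) = th f * g + f * th g.
Proof.
apply: Ser_ext => k /=; rewrite /cv mulr_suml -big_split; apply: eq_bigr => i _ /=.
have hi : (i <= k)%N by rewrite -ltnS.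
have e : (k%:R : rat) = i%:R + (k - i)%:R by rewrite -natrD subnKC.
rewrite e; ring.
Qed.

Lemma cg_th e f g : cg e f g -> cg e (th f) (th g).
Proof.
move=> h n /=; rewrite -mulrBl; apply: pdvMr => //; rewrite -nat_intr; exact: pdv_int.
Qed.
Lemma pI_th f : pI f -> pI (th f).
Proof. move=> h n /=; apply: pdvMr => //; rewrite -nat_intr; exact: pdv_int. Qed.

Definition X : Ser := mkSer (fun k => ((k == 1)%N)%:R).

Lemma coX0 f : co (X * f) 0 = 0.
Proof. by rewrite coM /cv big_ord_recl big_ord0 /= mul0r addr0. Qed.
Lemma coXS f k : co (X * f) k.+1 = co f k.
Proof.
rewrite coM /cv big_ord_recl /= mul0r add0r big_ord_recl /= mul1r subSS subn0.
rewrite big1 ?addr0 // => i _; by rewrite /= mul0r.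
Qed.
Lemma X_inj f g : X * f = X * g -> f = g.
Proof. by move=> h; apply: Ser_ext => k; rewrite -(coXS f) -(coXS g) h. Qed.
Lemma cg_X e f g : cg e (X * f) (X * g) -> cg e f g.
Proof. by move=> h n; have := h n.+1; rewrite !coXS. Qed.

Definition Dd (f : Ser) := mkSer (fun k => co f k.+1 * k.+1%:R).

Lemma th_X f : th f = X * Dd f.
Proof. apply: Ser_ext => -[|k]; first by rewrite coX0 /= mulr0. by rewrite coXS. Qed.

Lemma Dd_mul f g : Dd (f * g) = Dd f * g + f * Dd g.
Proof.
apply: X_inj; rewrite -th_X th_mul !th_X; ring.
Qed.
Lemma Dd_1 : Dd 1 = 0.
Proof. by apply: X_inj; rewrite -th_X th_1 mulr0. Qed.

Lemma cg_Dd e f g : cg e f g -> cg e (Dd f) (Dd g).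
Proof.
move=> h n /=; rewrite -mulrBl; apply: pdvMr => //; rewrite -nat_intr; exact: pdv_int.
Qed.
Lemma pI_Dd f : pI f -> pI (Dd f).
Proof. move=> h n /=; apply: pdvMr => //; rewrite -nat_intr; exact: pdv_int. Qed.

Definition Dn (n : nat) (f : Ser) := mkSer (fun k => co f (k + n)%N * ((k + n) ^_ n)%:R).

Lemma Dn_0 f : Dn 0 f = f.
Proof. by apply: Ser_ext => k /=; rewrite addn0 ffactn0 mulr1. Qed.
Lemma Dn_S n f : Dn n.+1 f = Dd (Dn n f).
Proof.
apply: Ser_ext => k /=; rewrite -mulrA -natrM.
by rewrite (_ : (k + n.+1 = k.+1 + n)%N) ?ffactnSr ?addnK // addnS addSn.
Qed.
Lemma pI_Dn n f : pI f -> pI (Dn n f).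
Proof. move=> h k /=; apply: pdvMr => //; rewrite -nat_intr; exact: pdv_int. Qed.

Definition sX (f : Ser) := mkSer (fun n => if (p %| n)%N then co f (n %/ p)%N else 0).

Lemma dvd_bpx b x : (b < p)%N -> (p %| b + p * x)%N = (b == 0%N).
Proof.
move=> hb; rewrite dvdn_addl ?dvdn_mulr //.
case: b hb => [|b] hb; first by rewrite dvdn0.
have : ~~ (p %| b.+1)%N by apply/negP => h; have := dvdn_leq (ltn0Sn b) h; rewrite leqNgt hb.
by move/negbTE => ->.
Qed.

Lemma sec_sX b (f : ser) x : (b < p)%N ->
  sec p b (fun n => if (p %| n)%N then f (n %/ p)%N else 0) x = if (b == 0)%N then f x else 0.
Proof.
move=> hb; rewrite /sec dvd_bpx //; case: eqP => // ->.
by rewrite add0n mulKn // prime_gt0.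
Qed.

Lemma sX_mul f g : sX (f * g) = sX f * sX g.
Proof.
have p0 := prime_gt0 hp.
apply: Ser_ext => N; rewrite coM (cv_psec hp (co (sX f))).
pose o : 'I_p := Ordinal p0.
have ne : forall b : 'I_p, b != o -> (nat_of_ord b == 0)%N = false.
  move=> b hb; apply/negbTE; apply: contra hb => /eqP h; apply/eqP; exact: val_inj.
rewrite (bigD1 o) //= [X in _ + X]big1 ?addr0; last first.
  move=> b hb; apply: big1 => c _; case: ifP => // _.
  rewrite (@cv_ext _ (fun _ => 0) _ (sec p c (co (sX g)))) ?cv0l // => x.
  by rewrite /= sec_sX // ne.
rewrite (bigD1 o) //= [X in _ + X]big1 ?addr0; last first.
  move=> c hc; case: ifP => // _.
  rewrite (@cv_ext _ (sec p 0 (co (sX f))) _ (fun _ => 0)) ?cv0r // => x.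
  by rewrite /= sec_sX // ne.
rewrite !addn0 subn0 /=; case: ifP => // _.
by apply: cv_ext => x; rewrite sec_sX.
Qed.

Lemma sX_1 : sX 1 = 1.
Proof.
apply: Ser_ext => -[|n] /=; first by rewrite dvdn0 div0n.
case: ifP => h //; rewrite /del.
have : (0 < n.+1 %/ p)%N by rewrite divn_gt0 ?prime_gt0 // dvdn_leq.
by case: (n.+1 %/ p)%N.
Qed.

Lemma sX_sub f g : sX (f - g) = sX f - sX g.
Proof. by apply: Ser_ext => n /=; case: ifP => _; rewrite ?subrr. Qed.

Lemma th_sX f : th (sX f) = p%:R * sX (th f).
Proof.
apply: Ser_ext => n; rewrite coMnat /=; case: ifP => h; last by rewrite mul0r mulr0.
have e : (n%:R : rat) = p%:R * (n %/ p)%:R by rewrite -natrM mulnC divnK.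
rewrite e; ring.
Qed.

Lemma cg_sX e f g : cg e f g -> cg e (sX f) (sX g).
Proof. by move=> h n /=; case: ifP => _ //; rewrite subrr; exact: pdv0. Qed.
Lemma pI_sX f : pI f -> pI (sX f).
Proof. by move=> h n /=; case: ifP => _ //; exact: pdv0. Qed.

Lemma cg_p e f g : cg e f g -> cg e.+1 (p%:R * f) (p%:R * g).
Proof.
move=> h n; rewrite !coMnat -mulrBr; have := pdvpX 1 (h n); by rewrite expr1 addn1.
Qed.

End SerCong.

End M8.
Import M8.

Module M9.
Local Open Scope ring_scope.

Lemma size_su f n : size (sinv_upto f n) = n.+1.
Proof. by elim: n => [|n IH] //=; rewrite size_rcons IH. Qed.

Lemma nth_su f n i : (i <= n)%N -> nth 0 (sinv_upto f n) i = sinv f i.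
Proof.
elim: n i => [|n IH] i hi; first by move: hi; rewrite leqn0 => /eqP ->.
case: (ltngtP i n.+1) hi => // [hlt _ | -> _]; last by [].
rewrite /= nth_rcons size_su hlt; exact: IH.
Qed.

Lemma sinvS f n : sinv f n.+1 = - \sum_(i < n.+1) f i.+1 * sinv f (n - i)%N.
Proof.
rewrite /sinv /= nth_rcons size_su ltnn eqxx; congr (- _); apply: eq_bigr => i _.
by rewrite nth_su // leq_subr.
Qed.

Lemma smul_sinv f : f 0%N = 1 -> forall n, smul f (sinv f) n = ((n == 0)%N)%:R.
Proof.
move=> h0 [|n].
  by rewrite /smul big_ord_recl big_ord0 addr0 h0 /sinv /= mul1r.
rewrite /smul big_ord_recl h0 mul1r subn0 sinvS /=.
by rewrite (eq_bigr (fun i : 'I_n.+1 => f i.+1 * sinv f (n - i)%N)) ?addNr.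
Qed.

Definition iS (f : pseries) : Ser := mkSer (fun k => (f k)%:~R).

Lemma iS_smul f g : iS (smul f g) = iS f * iS g.
Proof.
apply: Ser_ext => n; rewrite coM /= /smul /cv rmorph_sum; apply: eq_bigr => i _.
by rewrite rmorphM.
Qed.

Lemma iS_sinv f : f 0%N = 1 -> iS f * iS (sinv f) = 1.
Proof.
move=> h; rewrite -iS_smul; apply: Ser_ext => n /=; rewrite smul_sinv // /del.
by case: (n == 0)%N.
Qed.

Lemma pI_iS p f : prime p -> pI p (iS f).
Proof. by move=> hp n; exact: pdv_int. Qed.

Lemma iS_scompX p f : iS (scompX f p) = sX p (iS f).
Proof. by apply: Ser_ext => n /=; rewrite /scompX; case: ifP. Qed.

Lemma iS_sderiv n f : iS (sderiv n f) = Dn n (iS f).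
Proof. by apply: Ser_ext => k /=; rewrite /sderiv rmorphM rmorph_nat. Qed.

End M9.
Import M9.

Module M10.
Local Open Scope ring_scope.

Section Cross.
Variable p : nat.
Hypothesis hp : prime p.
Variables A g : ser.
Hypothesis hA : forall x, A x = g x * A (x %/ p)%N.
Hypothesis hAi : pint p A.
Hypothesis hg0 : forall x, pdv p 0 (g x).
Hypothesis hgC : forall j x m, pdv p j (g (x + m * p ^ j)%N - g x).

Definition Tr (s : nat) : ser := fun m => if (m < p ^ s)%N then A m else 0.
Definition sXf (h : ser) : ser := fun n => if (p %| n)%N then h (n %/ p)%N else 0.

Lemma S_alt s u v M :
  cv (Au A u) (lt p s (Au A v)) M - cv (lt p s (Au A u)) (Au A v) M = S p A s u v M.
Proof.
have E : forall w i, Au A w i = ge p s (Au A w) i + lt p s (Au A w) i.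
  by move=> w i; rewrite /ge /lt; case: leqP => _; rewrite ?addr0 ?add0r.
rewrite (cv_ext M (E u) (fun i => erefl _)) (cv_ext M (fun i => erefl _) (E v)).
rewrite cv_addl cv_addr /S (cv_comm (lt p s (Au A u)) (ge p s (Au A v))); ring.
Qed.

Lemma cross s N :
  pdv p s.+1 (cv A (sXf (Tr s)) N - cv (Tr s.+1) (sXf A) N).
Proof.
rewrite (cv_psec hp A) (cv_psec hp (Tr s.+1)) -sumrB; apply: pdv_sum => // b _.
rewrite -sumrB; apply: pdv_sum => // c _.
case: ifP => _; last by rewrite subrr; exact: pdv0.
set M := ((N - (b + c)) %/ p)%N.
case: (eqVneq (nat_of_ord c) 0%N) => hc; last first.
  rewrite (@cv_ext _ _ (sec p c (sXf (Tr s))) (fun _ => 0) M (fun i => erefl _)); last first.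
    by move=> x; rewrite /sXf sec_sX // (negbTE hc).
  rewrite (@cv_ext _ _ (sec p c (sXf A)) (fun _ => 0) M (fun i => erefl _)); last first.
    by move=> x; rewrite /sXf sec_sX // (negbTE hc).
  rewrite !cv0r subrr; exact: pdv0.
have e1 : forall x, sec p b A x = Au A (fun y => g (b + p * y)%N) x.
  by move=> x; rewrite /sec /Au hA div_bpx // mulrC.
have e2 : forall x, sec p c (sXf (Tr s)) x = lt p s (Au A (fun _ => 1)) x.
  by move=> x; rewrite /sXf sec_sX // hc eqxx /Tr /lt /Au mulr1.
have e3 : forall x, sec p b (Tr s.+1) x = lt p s (Au A (fun y => g (b + p * y)%N)) x.
  move=> x; rewrite /sec /Tr /lt /Au ltnNge le_bpx // -ltnNge.
  by case: ifP => _ //; rewrite hA div_bpx // mulrC.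
have e4 : forall x, sec p c (sXf A) x = Au A (fun _ => 1) x.
  by move=> x; rewrite /sXf sec_sX // hc eqxx /Au mulr1.
rewrite (cv_ext M e1 e2) (cv_ext M e3 e4) S_alt.
apply: (dwork hp hA hAi hg0 hgC).
  by apply: C1_g.
apply: C1_const; have := pdv_int hp 1; by rewrite rmorph1.
Qed.

End Cross.

End M10.
Import M10.

Module M11.
Local Open Scope ring_scope.

Lemma Llem (U Ui V Vi : Ser) : U * Ui = 1 -> V * Vi = 1 ->
  th (U * Vi) * (V * Ui) = th U * Ui - th V * Vi.
Proof.
move=> hU hV.
have h : th V * Vi + V * th Vi = 0 by rewrite -th_mul hV th_1.
have h' : V * th Vi = - (th V * Vi) by apply/eqP; rewrite -addr_eq0 addrC h.
rewrite th_mul.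
have -> : (th U * Vi + U * th Vi) * (V * Ui) = th U * Ui * (V * Vi) + (U * Ui) * (V * th Vi) by ring.
by rewrite hU hV h' mulr1 mul1r.
Qed.

Lemma Ylem (U Ui W : Ser) : U * Ui = 1 ->
  Dd W * Ui = Dd (W * Ui) + (W * Ui) * (Dd U * Ui).
Proof.
move=> hU.
have h : Dd U * Ui + U * Dd Ui = 0 by rewrite -Dd_mul hU Dd_1.
have h' : Dd Ui = - (Dd U * Ui * Ui).
  have -> : Dd Ui = (U * Ui) * Dd Ui by rewrite hU mul1r.
  have -> : U * Ui * Dd Ui = Ui * (U * Dd Ui) by ring.
  have -> : U * Dd Ui = - (Dd U * Ui) by apply/eqP; rewrite -addr_eq0 addrC h.
  ring.
rewrite Dd_mul h'; ring.
Qed.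

Lemma inv_unique (B Bi C : Ser) : B * Bi = 1 -> B * C = 1 -> Bi = C.
Proof.
move=> h1 h2; have -> : Bi = Bi * (B * C) by rewrite h2 mulr1.
by rewrite mulrA (mulrC Bi) h1 mul1r.
Qed.

Section Main.
Variables (p c q : nat).
Hypothesis hp : prime p.
Hypothesis hq : (q * p = 6)%N.
Hypothesis hq5 : (q + p = 5)%N.
Hypothesis hc : (c * p = c + 2)%N.
Hypothesis hAid : forall x, (Anat x * Pf p (p * x) * x`! ^ 2 = p ^ (c * x) * Pf p (6 * x))%N.

Local Notation F := (iS Fser).
Local Notation T s := (iS (Ftrunc p s)).
Local Notation Fi := (iS (sinv Fser)).
Local Notation Ti s := (iS (sinv (Ftrunc p s))).
Local Notation Bi := (iS (sinv (scompX Fser p))).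
Local Notation Di s := (iS (sinv (scompX (Ftrunc p s) p))).

Lemma coF n : co F n = Ar n.
Proof. by rewrite /= /Acoef /Ar nat_intr. Qed.
Lemma coT s n : co (T s) n = Tr p Ar s n.
Proof. rewrite /= /Ftrunc /Tr; case: ifP => _ //; exact: coF. Qed.

Lemma Fser0 : Fser 0%N = 1. Proof. by []. Qed.
Lemma Ftrunc0 s : Ftrunc p s 0%N = 1.
Proof. by rewrite /Ftrunc expn_gt0 prime_gt0. Qed.

Lemma hF : F * Fi = 1. Proof. exact: iS_sinv. Qed.
Lemma hT s : T s * Ti s = 1. Proof. apply: iS_sinv; exact: Ftrunc0. Qed.
Lemma hB : sX p F * Bi = 1.
Proof. rewrite -iS_scompX; apply: iS_sinv; by rewrite /scompX dvdn0 div0n. Qed.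
Lemma hD s : sX p (T s) * Di s = 1.
Proof. rewrite -iS_scompX; apply: iS_sinv; by rewrite /scompX dvdn0 div0n Ftrunc0. Qed.

Lemma pIall (f : pseries) : pI p (iS f). Proof. exact: pI_iS. Qed.

Lemma coSX f n : co (sX p f) n = if (p %| n)%N then co f (n %/ p)%N else 0.
Proof. by []. Qed.

Lemma cross_ser s : cg p s.+1 (F * sX p (T s)) (T s.+1 * sX p F).
Proof.
move=> n; rewrite !coM.
rewrite (@cv_ext _ Ar _ (sXf p (Tr p Ar s)) n coF); last first.
  by move=> i; rewrite /sXf coSX; case: ifP => _ //; rewrite coT.
rewrite (@cv_ext _ (Tr p Ar s.+1) _ (sXf p Ar) n (coT s.+1)); last first.
  by move=> i; rewrite /sXf coSX; case: ifP => _ //; rewrite coF.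
apply: (cross hp (hA_ok hp hc hAid)) => //.
- by move=> x; exact: Ar_int.
- by move=> x; exact: hg0_ok.
- by move=> j x m; exact: (hgC_ok c hp hq hq5).
Qed.

Lemma goal1_ser s : cg p s.+1 (F * Bi) (T s.+1 * Di s).
Proof.
have e1 : F * Bi = (F * sX p (T s)) * (Bi * Di s).
  have -> : F * sX p (T s) * (Bi * Di s) = F * Bi * (sX p (T s) * Di s) by ring.
  by rewrite hD mulr1.
have e2 : T s.+1 * Di s = (T s.+1 * sX p F) * (Bi * Di s).
  have -> : T s.+1 * sX p F * (Bi * Di s) = T s.+1 * Di s * (sX p F * Bi) by ring.
  by rewrite hB mulr1.
rewrite e1 e2; apply: cg_mulr => //; first exact: cross_ser.
apply: pI_mul => //; exact: pIall.
Qed.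

Lemma Lc s : cg p s (th F * Fi) (th (T s) * Ti s).
Proof.
elim: s => [|s IH].
  apply: cg0 => //; apply: pI_mul => //; (try apply: (pI_th hp)) => //; exact: pIall.
have hBi : Bi = sX p Fi.
  apply: (inv_unique hB); by rewrite -(sX_mul hp) hF (sX_1 hp).
have hDi : Di s = sX p (Ti s).
  apply: (inv_unique (hD s)); by rewrite -(sX_mul hp) hT (sX_1 hp).
have L1 := Llem hF hB.
have L2 := Llem (hT s.+1) (hD s).
have E1 : th F * Fi = th (F * Bi) * (sX p F * Fi) + p%:R * sX p (th F * Fi).
  by rewrite L1 th_sX hBi (sX_mul hp); ring.
have E2 : th (T s.+1) * Ti s.+1 = th (T s.+1 * Di s) * (sX p (T s) * Ti s.+1)
    + p%:R * sX p (th (T s) * Ti s).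
  by rewrite L2 th_sX hDi (sX_mul hp); ring.
rewrite E1 E2; apply: (cg_add hp); last by apply: cg_p => //; apply: cg_sX.
all: try exact: hp.
have g1 := goal1_ser s.
have i1 : cg p s.+1 (sX p F * Fi) (sX p (T s) * Ti s.+1).
  apply: (cg_inv hp g1).
  - have -> : F * Bi * (sX p F * Fi) = (F * Fi) * (sX p F * Bi) by ring.
    by rewrite hF hB mulr1.
  - have -> : T s.+1 * Di s * (sX p (T s) * Ti s.+1) = (T s.+1 * Ti s.+1) * (sX p (T s) * Di s) by ring.
    by rewrite hT hD mulr1.
  - apply: pI_mul => //; [apply: (pI_sX hp) | ]; exact: pIall.
  - apply: pI_mul => //; [apply: (pI_sX hp) | ]; exact: pIall.
apply: (cg_mul hp (cg_th hp g1) i1).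
- apply: (pI_th hp); apply: pI_mul => //; exact: pIall.
- apply: pI_mul => //; [apply: (pI_sX hp) | ]; exact: pIall.
Qed.

Lemma Yn s n : cg p s.+1 (Dn n F * Fi) (Dn n (T s.+1) * Ti s.+1).
Proof.
have Y1 : cg p s.+1 (Dd F * Fi) (Dd (T s.+1) * Ti s.+1).
  apply: (cg_X (p := p)); rewrite !mulrA -!th_X; exact: Lc.
elim: n => [|n IH]; first by rewrite !Dn_0 hF hT; exact: cg_refl.
rewrite !Dn_S (Ylem _ hF) (Ylem _ (hT s.+1)).
apply: (cg_add hp); first exact: (cg_Dd hp).
apply: (cg_mul hp IH Y1).
- apply: pI_mul => //; [apply: (pI_Dn hp) | ]; exact: pIall.
- apply: pI_mul => //; [apply: (pI_Dd hp) | ]; exact: pIall.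
Qed.

Theorem main_thm s n :
  scong (p ^ s.+1)%N%:Z
    (smul Fser (sinv (scompX Fser p)))
    (smul (Ftrunc p s.+1) (sinv (scompX (Ftrunc p s) p)))
  /\
  scong (p ^ s.+1)%N%:Z
    (smul (sderiv n Fser) (sinv Fser))
    (smul (sderiv n (Ftrunc p s.+1)) (sinv (Ftrunc p s.+1))).
Proof.
split => k; apply: (pdv_dvd hp); rewrite rmorphB /=.
  have := goal1_ser s k.
  have e1 := congr1 (fun f => co f k) (iS_smul Fser (sinv (scompX Fser p))).
  have e2 := congr1 (fun f => co f k) (iS_smul (Ftrunc p s.+1) (sinv (scompX (Ftrunc p s) p))).
  rewrite /= in e1 e2; rewrite e1 e2 !coM.
  by [] .
have := Yn s n k; rewrite -!iS_sderiv -!iS_smul.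
by [].
Qed.

End Main.

End M11.
Import M11.

Local Open Scope ring_scope.

Theorem lemma3p6 (p : nat) (hp : p = 2%N \/ p = 3%N) (s n : nat) :
  scong (p ^ s.+1)%N%:Z
    (smul Fser (sinv (scompX Fser p)))
    (smul (Ftrunc p s.+1) (sinv (scompX (Ftrunc p s) p)))
  /\
  scong (p ^ s.+1)%N%:Z
    (smul (sderiv n Fser) (sinv Fser))
    (smul (sderiv n (Ftrunc p s.+1)) (sinv (Ftrunc p s.+1))).
Proof.
case: hp => ->.
  apply: (@main_thm 2 2 3) => //; exact: Aid2.
apply: (@main_thm 3 1 2) => //; exact: Aid3.
Qed.
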